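(* Let $n\ge 2$ and $u,v\in\{a,b\}^n$. If $\big||u|_c-|v|_c\big|=1$ for some $c\in\{a,b\}$, then $(u,v)$ is not an MAU pair.
   Context: Let $\Sigma=\{a,b\}$. For a word $w$ and a letter $c$, $|w|_c$ denotes the number of occurrences of $c$ in $w$. Two words $x,y$ are abelian equivalent, written $x\sim_{\mathrm{abl}}y$, if $|x|_c=|y|_c$ for all $c\in\Sigma$. For words $u,v$: a pair $(x,y)$ is an internal abelian-border of $(u,v)$ if $x$ is a nonempty proper suffix of $u$, $y$ is a proper prefix of $v$, and $x\sim_{\mathrm{abl}}y$; it is an external abelian-border of $(u,v)$ if $x$ is a nonempty proper prefix of $u$, $y$ is a proper suffix of $v$, and $x\sim_{\mathrm{abl}}y$. The pair $(u,v)$ is mutually abelian-bordered (MAB) if it has both an internal and an external abelian-border, and mutually abelian-unbordered (MAU) if it has neither. *)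

(* Defs.v *)
From HB Require Import structures.
From mathcomp Require Import all_boot.
Set Implicit Arguments. Unset Strict Implicit. Unset Printing Implicit Defensive.

Inductive letter := La | Lb.
Definition letter_eqb (x y : letter) : bool :=
  match x, y with La, La | Lb, Lb => true | _, _ => false end.
Lemma letter_eqP : Equality.axiom letter_eqb.
Proof. by case; case; constructor. Qed.
HB.instance Definition _ := hasDecEq.Build letter letter_eqP.

Definition word := seq letter.

Definition occ (w : word) (c : letter) : nat := count_mem c w.

Definition abel_equiv (x y : word) : Prop := forall c : letter, occ x c = occ y c.

Definition is_prefix (x w : word) : Prop := exists z, w = x ++ z.
Definition is_suffix (x w : word) : Prop := exists z, w = z ++ x.
Definition proper_prefix (x w : word) : Prop := is_prefix x w /\ size x < size w.
Definition proper_suffix (x w : word) : Prop := is_suffix x w /\ size x < size w.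

Definition internal_abel_border (u v x y : word) : Prop :=
  [/\ x <> [::], proper_suffix x u, proper_prefix y v & abel_equiv x y].
Definition external_abel_border (u v x y : word) : Prop :=
  [/\ x <> [::], proper_prefix x u, proper_suffix y v & abel_equiv x y].

Definition MAB (u v : word) : Prop :=
  (exists x y, internal_abel_border u v x y) /\ (exists x y, external_abel_border u v x y).
Definition MAU (u v : word) : Prop :=
  ~ (exists x y, internal_abel_border u v x y) /\ ~ (exists x y, external_abel_border u v x y).

(* Main.v *)
Require Import Defs.
From mathcomp Require Import all_boot.
From mathcomp Require Import zify.

Lemma cntAB (w : word) : count_mem La w + count_mem Lb w = size w.
Proof. elim: w => [|x w IH] //=; case: x => /=; rewrite -IH ?add0n ?add1n ?addSn ?addnS //. Qed.

Lemma abelE (x y : word) : size x = size y -> count_mem La x = count_mem La y ->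
  abel_equiv x y.
Proof.
move=> Hs Ha c; rewrite /occ; case: c => //.
have := cntAB x; have := cntAB y; lia.
Qed.

Lemma step (w : word) k :
  count_mem La (take k w) <= count_mem La (take k.+1 w) <= (count_mem La (take k w)).+1.
Proof.
elim: w k => [|x w IH] [|k] //=.
- by rewrite take0; case: (x == La).
- have := IH k; case: (x == La) => /=; lia.
Qed.

Lemma ivt (s p : nat -> nat) a :
  (forall k, s k <= s k.+1 <= (s k).+1) -> (forall k, p k <= p k.+1 <= (p k).+1) ->
  forall b, a <= b -> s a < p a -> p b < s b -> exists k, a < k < b /\ s k = p k.
Proof.
move=> Hs Hp; elim=> [|b IH] Hab Ha Hb.
- have : a = 0 by lia. move=> E; subst; lia.
- case: (ltngtP (s b) (p b)) => H.
  + have := Hs b; have := Hp b; lia.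
  + case: (leqP a b) => Hab'.
    * have [k [Hk E]] := IH Hab' Ha H. exists k; split => //; lia.
    * have : a = b.+1 by lia. move=> E; subst; lia.
  + case: (leqP a b) => Hab'.
    * case: (ltngtP a b) => Hab2.
      -- exists b; split => //; lia.
      -- lia.
      -- subst; lia.
    * have : a = b.+1 by lia. move=> E; subst; lia.
Qed.

Lemma cnt_td (w : word) k : count_mem La (take k w) + count_mem La (drop k w) = count_mem La w.
Proof. by rewrite -count_cat cat_take_drop. Qed.

Lemma int_at (u v : word) n k : size u = n -> size v = n -> 0 < k < n ->
  count_mem La (take k (rev u)) = count_mem La (take k v) ->
  exists x y, internal_abel_border u v x y.
Proof.
move=> Hu Hv Hk E.
rewrite take_rev count_rev Hu in E.
exists (drop (n - k) u), (take k v); split.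
- move=> H; have := congr1 size H; rewrite size_drop /=; lia.
- split; first by exists (take (n - k) u); rewrite cat_take_drop.
  rewrite size_drop; lia.
- split; first by exists (drop k v); rewrite cat_take_drop.
  rewrite size_takel; lia.
- apply: abelE => //; rewrite size_drop size_takel; lia.
Qed.

Lemma ext_at (u v : word) n k : size u = n -> size v = n -> 0 < k < n ->
  count_mem La (take k u) = count_mem La (drop (n - k) v) ->
  exists x y, external_abel_border u v x y.
Proof.
move=> Hu Hv Hk E.
exists (take k u), (drop (n - k) v); split.
- move=> H; have := congr1 size H; rewrite size_takel /=; lia.
- split; first by exists (drop k u); rewrite cat_take_drop.
  rewrite size_takel; lia.
- split; first by exists (take (n - k) v); rewrite cat_take_drop.
  rewrite size_drop; lia.
- apply: abelE => //; rewrite size_drop size_takel; lia.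
Qed.

Lemma MAU_sym u v : MAU u v -> MAU v u.
Proof.
move=> [Hi He]; split.
- move=> [x [y [Hx H1 H2 H3]]]; apply: He; exists y, x; split => //.
  + move=> E; apply: Hx; apply/nilP; rewrite /nilp -cntAB.
    by have := H3 La; have := H3 Lb; rewrite E /occ /= => -> ->.
- move=> [x [y [Hx H1 H2 H3]]]; apply: Hi; exists y, x; split => //.
  + move=> E; apply: Hx; apply/nilP; rewrite /nilp -cntAB.
    by have := H3 La; have := H3 Lb; rewrite E /occ /= => -> ->.
Qed.

Lemma main1 n u v : 2 <= n -> size u = n -> size v = n ->
  occ u La = (occ v La).+1 -> ~ MAU u v.
Proof.
move=> Hn Hu Hv E [Hi He].
set S := fun k => count_mem La (take k (rev u)).
set P := fun k => count_mem La (take k v).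
have S1 : S 1 <= 1 by have := step (rev u) 0; rewrite take0 => /andP[_ h]; exact: h.
have P1 : P 1 <= 1 by have := step v 0; rewrite take0 => /andP[_ h]; exact: h.
case: (ltngtP (S 1) (P 1)) => H.
- have HSn : S n = occ u La by rewrite /S take_oversize ?size_rev ?Hu // count_rev.
  have HPn : P n = occ v La by rewrite /P take_oversize ?Hv.
  have [k [Hk Ek]] := @ivt S P 1 (fun k => step (rev u) k) (fun k => step v k) n (ltnW Hn) H
     (ltac:(rewrite HSn HPn E; lia)).
  apply: Hi; apply: (@int_at u v n k Hu Hv _ Ek); lia.
- apply: He; apply: (@ext_at u v n (n - 1)) => //; first lia.
  have := cnt_td u (n - 1); have := cnt_td v 1.
  have : count_mem La (drop (n - 1) u) = S 1.
    by rewrite /S take_rev count_rev Hu.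
  have E2 : count_mem La u = (count_mem La v).+1 := E.
  have -> : n - (n - 1) = 1 by lia.
  rewrite /S /P in H S1 P1 *; move=> A B C.
  have h1 : count_mem La (take 1 (rev u)) = 1 by lia.
  have h2 : count_mem La (take 1 v) = 0 by lia.
  rewrite h2 in B; rewrite A h1 in C. lia.
- apply: Hi; apply: (@int_at u v n 1 Hu Hv _ H); lia.
Qed.

Theorem mainTheorem10 (n : nat) (u v : word) :
  2 <= n -> size u = n -> size v = n ->
  (exists c : letter, occ u c = (occ v c).+1 \/ occ v c = (occ u c).+1) ->
  ~ MAU u v.
Proof.
move=> Hn Hu Hv [c Hc].
have Hu' := cntAB u; have Hv' := cntAB v.
have [E|E] : occ u La = (occ v La).+1 \/ occ v La = (occ u La).+1.
  by case: c Hc; rewrite /occ; lia.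
- exact: main1 Hn Hu Hv E.
- by move/MAU_sym; apply: main1 Hn Hv Hu E.
Qed.
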